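(* Let $G$ be a good finite group and let $N$ be a normal subgroup of $G$ of index $2$. Then the cyclic subgroups $\langle x\rangle$, where $x$ ranges over the $2$-elements of $G$ lying in $G\setminus N$, are not all conjugate in $G$; that is, there exist $2$-elements $x,y\in G\setminus N$ such that $\langle x\rangle$ and $\langle y\rangle$ are not conjugate in $G$.
   Context: A finite group is called good if its Sylow-2 subgroup is trivial or noncyclic. A $2$-element of $G$ is an element whose order is a power of $2$. *)

(* Defs.v *)
From mathcomp Require Import all_boot all_fingroup all_solvable.
Set Implicit Arguments. Unset Strict Implicit. Unset Printing Implicit Defensive.
Open Scope group_scope.

Definition good (gT : finGroupType) (G : {group gT}) : Prop :=
  forall S : {group gT}, S \in 'Syl_2(G) -> S :=: 1 \/ ~~ cyclic S.

(* Main.v *)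
Require Import Defs.
From mathcomp Require Import all_boot all_fingroup all_solvable.
From Stdlib Require Import Classical.
Open Scope group_scope.

Lemma elt_Ldiv (gT : finGroupType) (H : {group gT}) (y : gT) :
  y \in H -> (y ^+ #|H|`_2 == 1) = 2.-elt y.
Proof.
move=> Hy; apply/idP/idP.
- move/eqP=> h; have: #[y] %| #|H|`_2 by rewrite order_dvdn h.
  by move/pnat_dvd; apply; apply: part_pnat.
- move=> py; rewrite -order_dvdn -(part_pnat_id py).
  by apply: partn_dvd => //; apply: order_dvdG.
Qed.

Lemma index2_mul (gT : finGroupType) (G N : {group gT}) (g h : gT) :
  N <| G -> #|G : N| = 2%N -> g \in G :\: N -> h \in G :\: N -> g * h \in N.
Proof.
case/andP=> sNG nGN iGN /setDP[Gg nNg] /setDP[Gh nNh].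
have Ng := subsetP nGN g Gg; have Nh := subsetP nGN h Gh.
have oQ : #|G / N| = 2%N by rewrite card_quotient.
have Qa := mem_quotient N Gg; have Qb := mem_quotient N Gh.
have a1 : coset N g != 1 by apply: contra nNg => /eqP; apply: coset_idr.
have b1 : coset N h != 1 by apply: contra nNh => /eqP; apply: coset_idr.
have eab : coset N g = coset N h.
  apply/eqP; apply: contraTT (leqnn 2) => nab.
  have: #|1 |: [set coset N g; coset N h]| <= #|G / N|.
    apply: subset_leq_card; apply/subsetP=> z; rewrite !inE.
    by case/or3P=> /eqP->.
  rewrite oQ cardsU1 cards2 nab !inE negb_or eq_sym a1 eq_sym b1 /=.
  by [].
apply: coset_idr; first exact: groupM.
rewrite morphM //= -eab -[coset N g * _]/(coset N g ^+ 2).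
by rewrite -oQ expg_cardG.
Qed.

Theorem lemma2p7 (gT : finGroupType) (G N : {group gT}) :
  good G -> N <| G -> #|G : N| = 2%N ->
  exists x y : gT,
    [/\ x \in G :\: N, y \in G :\: N, 2.-elt x, 2.-elt y &
        ~ (exists2 g, g \in G & <[x]> :^ g = <[y]>)].
Proof.
move=> goodG nNG iGN; have [sNG nGN] := andP nNG.
case: (classic (exists x y : gT,
    [/\ x \in G :\: N, y \in G :\: N, 2.-elt x, 2.-elt y &
        ~ (exists2 g, g \in G & <[x]> :^ g = <[y]>)])) => // Hn; exfalso.
have allc : forall x y, x \in G :\: N -> y \in G :\: N -> 2.-elt x -> 2.-elt y ->
    exists2 g, g \in G & <[x]> :^ g = <[y]>.
  move=> x y Hx Hy px py; apply: NNPP => nc; apply: Hn; exists x, y; by split.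
have [S sylS] := Sylow_exists 2 G.
have [sSG pS _] := and3P sylS.
have nsSN : ~~ (S \subset N).
  apply/negP=> sSN; move: sylS; rewrite /pHall => /and3P[_ _].
  rewrite -(Lagrange_index sNG sSN) iGN p'natE //.
  by rewrite dvdn_mulr.
have [x Sx nNx] := subsetPn nsSN.
have Gx := subsetP sSG x Sx.
have px : 2.-elt x := mem_p_elt pS Sx.
have GNx : x \in G :\: N by rewrite inE nNx Gx.
pose X := <[x]>%G.
have sXG : X \subset G by rewrite cycle_subG.
have pX : 2.-group X := px.
pose A := X :\: N.
pose D := [set y in G :\: N | 2.-elt y].
have nNg : forall g, g \in G -> N :^ g = N.
  by move=> g Gg; apply/normP; apply: (subsetP nGN).
have AgE : forall g, g \in G -> A :^ g = X :^ g :\: N.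
  by move=> g Gg; rewrite conjDg nNg.
have AgD : forall g w, g \in G -> w \in A :^ g -> w \in D.
  move=> g w Gg; rewrite AgE // => /setDP[wX nNw].
  have sXgG : X :^ g \subset G by rewrite -(conjGid Gg) conjSg.
  rewrite inE inE nNw (subsetP sXgG) //=.
  by apply: (mem_p_elt _ wX); rewrite pgroupJ.
have key : forall g w, g \in G -> w \in A :^ g -> <[w]> = X :^ g.
  move=> g w Gg wA; have wD := AgD g w Gg wA.
  move: wD; rewrite inE => /andP[wGN pw].
  have [k Gk ek] := allc x w GNx wGN px pw.
  move: wA; rewrite AgE // => /setDP[wX _].
  apply/eqP; rewrite eqEcard cycle_subG wX /=.
  by rewrite -ek !cardJg.
pose n2 := (#|G|`_2)%N; pose n1 := (#|N|`_2)%N.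
have n21 : n2 = (n1 * 2)%N.
  rewrite /n2 -(Lagrange sNG) iGN partnM //.
  by rewrite (part_pnat_id (pnat_id (isT : prime 2))).
pose L := 'Ldiv_n2(G).
have LN : L :&: N = 'Ldiv_n1(N).
  apply/setP=> w; rewrite !inE.
  case Nw: (w \in N); last by rewrite andbF andFb.
  rewrite (subsetP sNG w Nw) /= andbT.
  by rewrite /n1 /n2 (@elt_Ldiv _ G w (subsetP sNG w Nw)) (@elt_Ldiv _ N w Nw).
have LD : L :\: N = D.
  apply/setP=> w; rewrite !inE.
  case Gw: (w \in G); last by rewrite !andbF.
  by rewrite /= /n2 (@elt_Ldiv _ G w Gw) andbT.
have n1D : n1 %| #|D|.
  have h1 : n1 %| #|L|.
    have h2 : n2 %| #|L| := Frobenius_Ldiv (dvdn_part 2 #|G|).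
    by apply: dvdn_trans h2; rewrite n21 dvdn_mulr.
  have h3 : n1 %| #|L :&: N| by rewrite LN; apply: Frobenius_Ldiv; apply: dvdn_part.
  by move: h1; rewrite -(cardsID N L) (dvdn_addr _ h3) LD.
have partD : partition (A :^: G) D.
  apply/and3P; split.
  - apply/eqP/setP=> w; apply/bigcupP/idP.
      by case=> B /imsetP[g Gg ->]; apply: AgD.
    rewrite inE => /andP[wGN pw].
    have [g Gg eg] := allc x w GNx wGN px pw.
    exists (A :^ g); first by apply: imset_f.
    rewrite AgE // inE eg cycle_id.
    by move: wGN; rewrite inE => /andP[-> _].
  - apply/trivIsetP=> B1 B2 /imsetP[g Gg ->] /imsetP[h Gh ->] neq.
    rewrite -setI_eq0; apply: contraR neq => /set0Pn[w /setIP[w1 w2]].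
    by rewrite !AgE // -(key g w) // -(key h w).
  - apply/imsetP=> [[g Gg e]].
    have: x ^ g \in A :^ g by rewrite memJ_conjg inE nNx cycle_id.
    by rewrite -e inE.
have cD : #|D| = (#|A :^: G| * #|A|)%N.
  apply: card_uniform_partition partD => B /imsetP[g _ ->].
  by rewrite cardJg.
have cX : #|X| = (#|A| * 2)%N.
  have eA : A = ( *%g x) @: (X :&: N).
    apply/setP=> w; apply/idP/imsetP.
      move=> /setDP[wX nNw]; exists (x^-1 * w); last by rewrite mulKVg.
      rewrite inE groupM ?groupV ?cycle_id //=.
      apply: (index2_mul _ _ _ _ _ nNG iGN); last by rewrite inE nNw (subsetP sXG).
      by rewrite inE !groupV Gx nNx.
    case=> z /setIP[zX zN] ->; rewrite inE (groupM (cycle_id x) zX) andbT.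
    by apply: contra nNx => xzN; rewrite -(mulgK z x) groupM ?groupV.
  have e2 : #|A| = #|X :&: N| by rewrite eA card_imset //; apply: mulgI.
  by rewrite -(cardsID N X) -/A e2 addnn -mul2n mulnC.
pose M := 'N_G(X)%G.
have sMNA : M \subset 'N_G(A)%G.
  apply/subsetP=> g /setIP[Gg /normP nXg]; rewrite inE Gg /=.
  by apply/normP; rewrite AgE // nXg.
have n2X : n2 %| #|G : M| * #|X|.
  rewrite n21 cX mulnA dvdn_pmul2r //.
  apply: dvdn_trans n1D _; rewrite cD dvdn_pmul2r ?card_conjugates ?indexgS //.
  by apply/card_gt0P; exists x; rewrite inE nNx cycle_id.
have sMG : M \subset G := subsetIl _ _.
have MX : (#|M|`_2 %| #|X|)%N.
  have := partn_dvd 2 (_ : 0 < #|G : M| * #|X|) n2X.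
  rewrite muln_gt0 indexg_gt0 cardG_gt0 => /(_ isT).
  rewrite (part_pnat_id (part_pnat _ _)) partnM // (part_pnat_id pX).
  rewrite /n2 -(Lagrange sMG) partnM // mulnC.
  by rewrite dvdn_pmul2l // part_gt0.
have sXS : X \subset S by rewrite cycle_subG.
have SX : S \subset X.
  apply/negPn/negP => nSX.
  have prX : X \proper S by rewrite properE sXS.
  have lt := proper_card (nilpotent_proper_norm (pgroup_nil pS) prX).
  have le : #|'N_S(X)| <= #|X|.
    apply: dvdn_leq => //; apply: dvdn_trans MX.
    have pNS : 2.-group 'N_S(X) := pgroupS (subsetIl _ _) pS.
    rewrite -(part_pnat_id pNS); apply: partn_dvd => //.
    by apply: cardSg; apply: setSI.
  by move: lt; rewrite ltnNge le.
have cS : cyclic S by apply: cyclicS SX (cycle_cyclic x).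
have: S \in 'Syl_2(G) by rewrite inE.
case/goodG=> [S1 | ]; last by rewrite cS.
by move: Sx; rewrite S1 inE => /eqP x1; move: nNx; rewrite x1 group1.
Qed.
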